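(* Let $d$ be a positive integer and $q$ a prime power with $(d,q)\notin\{(1,2),(1,3),(2,2)\}$. Then every element of $\operatorname{GL}_d(q)$ is a product of two fixed-point-free elements of $\operatorname{GL}_d(q)$, where $A\in\operatorname{GL}_d(q)$ is called fixed-point-free if the only vector $v\in\mathbb{F}_q^d$ with $vA=v$ is $v=0$ (equivalently, $A$ is a derangement in the natural action of $\operatorname{GL}_d(q)$ on $\mathbb{F}_q^d\setminus\{0\}$).
   Context: $\operatorname{GL}_d(q)$ is the group of invertible $(d\times d)$-matrices over $\mathbb{F}_q$, acting on row vectors by right multiplication. *)

(* Defs.v *)
From HB Require Import structures.
From mathcomp Require Import all_boot all_order all_algebra all_field.
Set Implicit Arguments. Unset Strict Implicit. Unset Printing Implicit Defensive.
Import GRing.Theory.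
Local Open Scope ring_scope.

Definition fixed_point_free (F : fieldType) (d : nat) (A : 'M[F]_d) : Prop :=
  forall v : 'rV[F]_d, v *m A = v -> v = 0.

(* Main.v *)
Require Import Defs.
From HB Require Import structures.
From mathcomp Require Import all_boot all_order all_algebra all_field.
From mathcomp Require Import ring.
Import GRing.Theory.
Set Implicit Arguments. Unset Strict Implicit. Unset Printing Implicit Defensive.
Local Open Scope ring_scope.
Section Gen.
Variable F : fieldType.

Definition good n (M : 'M[F]_n) :=
  exists X : 'M[F]_n, [/\ X \in unitmx, X - 1%:M \in unitmx & X - M \in unitmx].

Lemma good_fpf n (A : 'M[F]_n) : good A -> A \in unitmx ->
  exists B C : 'M[F]_n,
    [/\ B \in unitmx, C \in unitmx,
        fixed_point_free B, fixed_point_free C & A = B *m C].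
Proof.
move=> [X [uX uX1 uXA]] uA.
exists X, (invmx X *m A); split.
- exact: uX.
- by rewrite unitmx_mul unitmx_inv uX uA.
- move=> v vX.
  have h : v *m (X - 1%:M) = 0 by rewrite mulmxBr mulmx1 vX subrr.
  by rewrite -(mulmxK uX1 v) h mul0mx.
- move=> v vC.
  have h : (v *m invmx X) *m (X - A) = 0.
    by rewrite mulmxBr mulmxKV // -mulmxA vC subrr.
  have h2 : v *m invmx X = 0 by rewrite -(mulmxK uXA (v *m invmx X)) h mul0mx.
  by rewrite -(mulmxKV uX v) h2 mul0mx.
- by rewrite mulKVmx.
Qed.

Lemma good_conj n (P Q M : 'M[F]_n) : P *m Q = 1%:M ->
  good (Q *m M *m P) -> good M.
Proof.
move=> PQ [X [uX uX1 uXA]]; exists (P *m X *m Q).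
have uP : P \in unitmx by case/mulmx1_unit: PQ.
have uQ : Q \in unitmx by case/mulmx1_unit: PQ.
have E : forall Y, P *m Y *m Q - P *m (Q *m M *m P) *m Q = P *m (Y - Q *m M *m P) *m Q.
  by move=> Y; rewrite mulmxBr mulmxBl.
have E1 : P *m (Q *m M *m P) *m Q = M.
  by rewrite !mulmxA PQ mul1mx -mulmxA PQ mulmx1.
have E2 : P *m 1%:M *m Q = 1%:M by rewrite mulmx1 PQ.
split.
- by rewrite !unitmx_mul uP uX uQ.
- by rewrite -{1}E2 -mulmxBl -mulmxBr !unitmx_mul uP uX1 uQ.
- by rewrite -{1}E1 E !unitmx_mul uP uXA uQ.
Qed.

Lemma good_tr n (M : 'M[F]_n) : good M^T -> good M.
Proof.
move=> [X [uX uX1 uXA]]; exists X^T; split.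
- by rewrite unitmx_tr.
- by rewrite -trmx1 -linearB /= unitmx_tr.
- by rewrite -{1}(trmxK M) -linearB /= unitmx_tr.
Qed.

Lemma good0 (M : 'M[F]_0) : good M.
Proof. by exists 1%:M; rewrite !unitmxE !det_mx00 !unitr1. Qed.

Lemma det_schur n (x : 'M[F]_1) (y : 'M[F]_(1, n)) (z : 'M[F]_(n, 1)) (W : 'M[F]_n) :
  W \in unitmx ->
  \det (block_mx x y z W) = (x - y *m invmx W *m z) 0 0 * \det W.
Proof.
move=> uW.
have -> : block_mx x y z W =
  block_mx 1%:M (y *m invmx W) 0 1%:M *m block_mx (x - y *m invmx W *m z) 0 z W.
  by rewrite mulmx_block !mul1mx !mul0mx ?mulmx0 ?add0r ?addr0 subrK mulmxKV.
by rewrite det_mulmx det_ublock det_lblock !det1 !mul1r det_mx11.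
Qed.

Lemma unit11 (x : 'M[F]_1) : (x \in unitmx) = (x 0 0 != 0).
Proof. by rewrite unitmxE det_mx11 unitfE. Qed.

Lemma good_step n (A : 'M[F]_(1 + n)) (W : 'M[F]_n) y z (xi : F) :
  W \in unitmx -> W - 1%:M \in unitmx -> W - drsubmx A \in unitmx ->
  xi != (y *m invmx W *m z) 0 0 ->
  xi != 1 + (y *m invmx (W - 1%:M) *m z) 0 0 ->
  xi != (ulsubmx A) 0 0 + ((y - ursubmx A) *m invmx (W - drsubmx A) *m (z - dlsubmx A)) 0 0 ->
  good A.
Proof.
move=> uW uW1 uWD h1 h2 h3.
exists (block_mx xi%:M y z W).
rewrite -[A]submxK (scalar_mx_block 1 n 1) !opp_block_mx !add_block_mx !unitmxE.
have e1 : forall (a : F) (B : 'M[F]_1), (a%:M - B) 0 0 = a - B 0 0.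
  by move=> a B; rewrite !mxE mulr1n.
have e2 : forall (a : F) (B C : 'M[F]_1), (a%:M - C - B) 0 0 = a - C 0 0 - B 0 0.
  by move=> a B C; rewrite !mxE mulr1n.
rewrite !det_schur // !unitrM -!unitmxE uW uW1 uWD !andbT !unitfE !subr0 e1 !e2.
have e3 : (1%:M : 'M[F]_1) 0 0 = 1 by rewrite mxE.
rewrite e3; split.
- by rewrite subr_eq0.
- by rewrite -addrA -opprD subr_eq0.
- by rewrite -addrA -opprD subr_eq0.
Qed.

Lemma mxE_sub m n (P Q : 'M[F]_(m, n)) i j : (P - Q) i j = P i j - Q i j.
Proof. by rewrite !mxE. Qed.
Lemma mxE_add m n (P Q : 'M[F]_(m, n)) i j : (P + Q) i j = P i j + Q i j.
Proof. by rewrite !mxE. Qed.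
Lemma mxE_opp m n (P : 'M[F]_(m, n)) i j : (- P) i j = - P i j.
Proof. by rewrite !mxE. Qed.

End Gen.

Section Fin.
Variable F : finFieldType.

Lemma avoid (s : seq F) : (size s < #|F|)%N -> exists x, x \notin s.
Proof.
move=> hs; case: (pickP (fun x => x \notin s)) => [x hx | h]; first by exists x.
have : (#|F| <= size s)%N.
  apply: (leq_trans _ (card_size s)); apply: subset_leq_card; apply/subsetP => x _.
  by move: (h x) => /negbFE.
by rewrite leqNgt hs.
Qed.

Lemma good_big n (A : 'M[F]_n) : (3 < #|F|)%N -> good A.
Proof.
move=> h4; elim: n A => [|n IH] A; first exact: good0.
change 'M[F]_(1 + n) in A.
have [W [uW uW1 uWD]] := IH (drsubmx A).
pose y : 'M[F]_(1, n) := 0; pose z : 'M[F]_(n, 1) := 0.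
have [xi] := @avoid [:: (y *m invmx W *m z) 0 0; 1 + (y *m invmx (W - 1%:M) *m z) 0 0;
   (ulsubmx A) 0 0 + ((y - ursubmx A) *m invmx (W - drsubmx A) *m (z - dlsubmx A)) 0 0] h4.
rewrite !inE !negb_or => /and3P [h1 h2 h3].
exact: (good_step uW uW1 uWD h1 h2 h3).
Qed.

Lemma good_step3 n (A : 'M[F]_(1 + n.+1)) : (2 < #|F|)%N -> good (drsubmx A) -> good A.
Proof.
move=> h3 [W [uW uW1 uWD]].
pose y : 'M[F]_(1, n.+1) := delta_mx 0 0.
pose w : 'M[F]_(n.+1, 1) := delta_mx 0 0.
pose z := - ((W - 1%:M) *m (W *m w)).
have E1 : y *m invmx W *m z = y *m w - y *m W *m w.
  rewrite /z mulmxN -!mulmxA [invmx W *m _]mulmxA mulmxBr mulVmx // mulmx1.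
  by rewrite mulmxBl mul1mx mulKmx // mulmxBr opprB.
have E2 : y *m invmx (W - 1%:M) *m z = - (y *m W *m w).
  by rewrite /z mulmxN -!mulmxA [invmx (W - 1%:M) *m _]mulmxA mulVmx // mul1mx !mulmxA.
have E3 : (y *m w) 0 0 = 1 by rewrite /y /w mul_delta_mx mxE !eqxx.
have [xi] := @avoid [:: (y *m invmx W *m z) 0 0;
   (ulsubmx A) 0 0 + ((y - ursubmx A) *m invmx (W - drsubmx A) *m (z - dlsubmx A)) 0 0] h3.
rewrite !inE !negb_or => /andP [h1 h2].
apply: (good_step uW uW1 uWD h1 _ h2).
by move: h1; rewrite E1 E2 mxE_sub mxE_opp E3.
Qed.

End Fin.

Section F2.
Variable F : finFieldType.
Hypothesis card2 : #|F| = 2.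

Lemma F2_cases (x : F) : x = 0 \/ x = 1.
Proof.
case: (eqVneq x 0) => [->|h0]; first by left.
case: (eqVneq x 1) => [->|h1]; first by right.
have : uniq [:: x; 0; 1] by rewrite /= !inE negb_or h0 h1 eq_sym oner_eq0.
move/card_uniqP => h; have := max_card (mem [:: x; 0; 1]).
by rewrite h card2.
Qed.

Lemma F2_char : 1 + 1 = 0 :> F.
Proof.
case: (F2_cases (1 + 1)) => // h.
by move/eqP: h; rewrite -subr_eq0 addrK oner_eq0.
Qed.

Lemma F2_opp m n (M : 'M[F]_(m, n)) : - M = M.
Proof.
apply/matrixP => i j; rewrite mxE.
set x := M i j.
have h : x + x = 0 by rewrite -{1 2}[x]mul1r -mulrDl F2_char mul0r.
by apply/eqP; rewrite eq_sym -addr_eq0 h.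
Qed.

Lemma good_b n (A : 'M[F]_(1 + n)) : good (drsubmx A) -> ursubmx A != 0 -> good A.
Proof.
move=> [W [uW uW1 uWD]] b0.
set a := ulsubmx A; set b := ursubmx A.
pose u1 := b *m invmx W; pose u2 := b *m invmx (W - 1%:M).
have rf : row_free (col_mx u1 u2).
  apply: inj_row_free => v.
  rewrite -[v]hsubmxK mul_row_col.
  rewrite [lsubmx v]mx11_scalar [rsubmx v]mx11_scalar !mul_scalar_mx => h.
  have bu1 : b = u1 *m W by rewrite mulmxKV.
  have bu2 : b = u2 *m (W - 1%:M) by rewrite mulmxKV.
  case: (F2_cases (lsubmx v 0 0)) => el; case: (F2_cases (rsubmx v 0 0)) => er;
    rewrite el er ?scale0r ?scale1r ?add0r ?addr0 in h.
  - by rewrite el er !(raddf0 (@scalar_mx F 1)) row_mx0.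
  - by move: b0; rewrite -/b bu2 h mul0mx eqxx.
  - by move: b0; rewrite -/b bu1 h mul0mx eqxx.
  - have e : u1 = u2 by rewrite -[u2]F2_opp; apply/eqP; rewrite -addr_eq0 h.
    have : u2 = 0.
      move: bu2; rewrite bu1 e mulmxBr mulmx1 => /eqP.
      by rewrite -subr_eq0 opprB addrC subrK => /eqP.
    by move=> u20; move: b0; rewrite -/b bu2 u20 mul0mx eqxx.
have [B VB] := row_freeP rf.
pose z := B *m col_mx a (a - 1%:M).
have : col_mx (u1 *m z) (u2 *m z) = col_mx a (a - 1%:M).
  by rewrite -mul_col_mx /z mulmxA VB mul1mx.
move/eq_col_mx => [Ez1 Ez2].
apply: (good_step (y := b) (z := z) (xi := a 0 0 + 1) uW uW1 uWD).
- by rewrite -/u1 Ez1 -subr_eq0 addrAC subrr add0r oner_eq0.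
- rewrite -/u2 Ez2 mxE_sub; have -> : (1%:M : 'M[F]_1) 0 0 = 1 by rewrite mxE.
  by rewrite [1 + _]addrC subrK -subr_eq0 addrAC subrr add0r oner_eq0.
- rewrite -/a -/b subrr !mul0mx (_ : (0 : 'M[F]_1) 0 0 = 0) ?mxE // addr0.
  by rewrite -subr_eq0 addrAC subrr add0r oner_eq0.
Qed.

End F2.

Section F2b.
Variable F : finFieldType.
Hypothesis card2 : #|F| = 2.

Lemma good2_step n (A : 'M[F]_(1 + n.+1)) : (forall D : 'M[F]_n.+1, good D) -> good A.
Proof.
move=> IH.
case: (eqVneq (ursubmx A) 0) => hb; last exact: (good_b card2 (IH _) hb).
case: (eqVneq (dlsubmx A) 0) => hc; last first.
  apply: good_tr.
  have e : A^T = block_mx (ulsubmx A)^T (dlsubmx A)^T (ursubmx A)^T (drsubmx A)^T.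
    by rewrite -{1}[A]submxK tr_block_mx.
  apply: (good_b card2); first exact: IH.
  rewrite e block_mxKur; apply: contra hc => /eqP h.
  by apply/eqP; rewrite -[dlsubmx A]trmxK h trmx0.
have EA : A = block_mx (ulsubmx A) 0 0 (drsubmx A) by rewrite -{1}[A]submxK hb hc.
set a := ulsubmx A in EA *; set D := drsubmx A in EA *.
case: (eqVneq D (a 0 0)%:M) => hD.
  have [X [uX uX1 _]] : good (block_mx (0 : 'M[F]_1) (delta_mx 0 0 : 'M[F]_(1, n.+1)) 0 0).
    apply: (good_b card2); first by rewrite block_mxKdr.
    rewrite block_mxKur; apply/eqP => /matrixP /(_ 0 0); rewrite !mxE !eqxx.
    by move/eqP; rewrite oner_eq0.
  exists X; split => //.
  rewrite EA hD {1}[a]mx11_scalar -scalar_mx_block.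
  by case: (F2_cases card2 (a 0 0)) => ->; rewrite ?(raddf0 (@scalar_mx F _)) ?subr0.
have [[i j] /= hij] : exists ij : 'I_n.+1 * 'I_n.+1, D ij.1 ij.2 != (a 0 0)%:M ij.1 ij.2.
  case: (pickP (fun ij : 'I_n.+1 * 'I_n.+1 => D ij.1 ij.2 != (a 0 0)%:M ij.1 ij.2)) => [ij h|h].
    by exists ij.
  have E : D = (a 0 0)%:M by apply/matrixP => i j; apply/eqP/negbFE; exact: (h (i, j)).
  by move: hD; rewrite E eqxx.
pose e : 'M[F]_(1, n.+1) := delta_mx 0 i.
pose P : 'M[F]_(1 + n.+1) := block_mx 1%:M e 0 1%:M.
pose Q : 'M[F]_(1 + n.+1) := block_mx 1%:M (- e) 0 1%:M.
have PQ : P *m Q = 1%:M.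
  rewrite /P /Q mulmx_block !mul1mx !mulmx1 !mul0mx ?mulmx0 ?add0r ?addr0 ?addNr.
  by rewrite -scalar_mx_block.
apply: (good_conj PQ).
have -> : Q *m A *m P = block_mx a (a *m e - e *m D) 0 D.
  rewrite EA /P /Q !mulmx_block !mul1mx !mulmx1 !mul0mx !mulmx0 !add0r !addr0.
  by rewrite mul0mx add0r mulNmx.
apply: (good_b card2); first by rewrite block_mxKdr; exact: IH.
rewrite block_mxKur; apply/eqP => /matrixP /(_ 0 j).
rewrite mxE_sub -rowE [a]mx11_scalar mul_scalar_mx !mxE !eqxx /=.
move/eqP; rewrite subr_eq0 => /eqP h; move: hij; rewrite !mxE -h.
by rewrite [j == i]eq_sym mulr_natr eqxx.
Qed.

End F2b.

Section Refl.
Variable F : fieldType.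
Variable q : nat.
Hypothesis Hq : (0 < q)%N.
Hypothesis Hq0 : q%:R = 0 :> F.
Hypothesis Hnz : forall k, (0 < k < q)%N -> k%:R != 0 :> F.
Hypothesis Hsurj : forall x : F, has (fun k => k%:R == x) (iota 0 q).

Definition nsub (a b : nat) := (a + (q - 1) * b)%N.

Lemma nsubE a b : (nsub a b)%:R = a%:R - b%:R :> F.
Proof.
rewrite /nsub natrD natrM natrB // Hq0 sub0r mulN1r //.
Qed.

Lemma natr_modq k : (k %% q)%:R = k%:R :> F.
Proof. by rewrite {2}(divn_eq k q) natrD natrM Hq0 mulr0 add0r. Qed.

Lemma natr_neq0 k : (k %% q != 0)%N -> k%:R != 0 :> F.
Proof. by move=> h; rewrite -natr_modq Hnz // lt0n h ltn_pmod. Qed.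

Definition iota_inv (x : F) := find (fun k => k%:R == x) (iota 0 q).

Lemma iota_invP x : (iota_inv x < q)%N /\ (iota_inv x)%:R = x.
Proof.
have h := Hsurj x; have hs := h; rewrite has_find size_iota in hs; split => //.
by have /eqP := nth_find 0 h; rewrite nth_iota.
Qed.

Fixpoint allseqs k : seq (seq nat) :=
  if k is k'.+1 then [seq a :: t | a <- iota 0 q, t <- allseqs k'] else [:: [::]].

Lemma allseqs_mem s : all (fun a => a < q)%N s -> s \in allseqs (size s).
Proof.
elim: s => [|a s IH] //= /andP [ha hs].
by apply: (allpairs_f (fun a t => a :: t)); rewrite ?mem_iota ?IH.
Qed.

Definition mxn n (f : nat -> nat) : 'M[F]_n := \matrix_(i, j) (f (i * n + j)%N)%:R.

Definition idf n k : nat := (k %/ n == k %% n)%N.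

Definition okx n (dn : (nat -> nat) -> nat) (x m : nat -> nat) :=
  [&& (dn x %% q != 0)%N, (dn (fun k => nsub (x k) (idf n k)) %% q != 0)%N
    & (dn (fun k => nsub (x k) (m k)) %% q != 0)%N].

Definition check n dn :=
  all (fun s => has (fun x => okx n dn (nth 0 x) (nth 0 s)) (allseqs (n * n))) (allseqs (n * n)).

Lemma refl_good n dn :
  (forall f, \det (mxn n f) = (dn f)%:R) -> check n dn -> forall M : 'M[F]_n, good M.
Proof.
move=> Hdet Hc M.
case: n dn Hdet Hc M => [|n'] dn Hdet Hc M; first exact: good0.
have i0 : 'I_n'.+1 := ord0.
move: (n'.+1) dn Hdet Hc M i0 => {n'} n dn Hdet Hc M i0.
have ij_div : forall i j : 'I_n, ((i * n + j) %/ n = i)%N.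
  move=> i j; rewrite divnMDl ?divn_small ?addn0 //; by case: (n) i => [[]|].
have ij_mod : forall i j : 'I_n, ((i * n + j) %% n = j)%N.
  move=> i j; rewrite modnMDl modn_small //.
have ij_lt : forall i j : 'I_n, (i * n + j < n * n)%N.
  move=> i j; rewrite mulnC; apply: (@leq_trans (n * i + n)); first by rewrite ltn_add2l.
  by rewrite -mulnSr leq_mul2l ltn_ord orbT.
pose s := [seq iota_inv (M (insubd i0 (k %/ n)%N) (insubd i0 (k %% n)%N)) | k <- iota 0 (n * n)].
have sM : M = mxn n (nth 0 s).
  apply/matrixP => i j; rewrite mxE /s (nth_map 0) ?size_iota // nth_iota // add0n.
  by rewrite ij_div ij_mod !valKd; case: (iota_invP (M i j)).
have hs : s \in allseqs (n * n).
  have -> : (n * n)%N = size s by rewrite size_map size_iota.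
  apply: allseqs_mem; apply/allP => a /mapP [k _ ->].
  by case: (iota_invP (M (insubd i0 (k %/ n)%N) (insubd i0 (k %% n)%N))).
have /hasP [x _ /and3P [h1 h2 h3]] := allP Hc s hs.
exists (mxn n (nth 0 x)); rewrite !unitmxE !unitfE; split.
- by rewrite Hdet natr_neq0.
- have -> : mxn n (nth 0 x) - 1%:M = mxn n (fun k => nsub (nth 0 x k) (idf n k)).
    apply/matrixP => i j; rewrite !mxE nsubE /idf ij_div ij_mod.
    by rewrite (inj_eq val_inj).
  by rewrite Hdet natr_neq0.
- have -> : mxn n (nth 0 x) - M = mxn n (fun k => nsub (nth 0 x k) (nth 0 s k)).
    by rewrite {1}sM; apply/matrixP => i j; rewrite !mxE nsubE.
  by rewrite Hdet natr_neq0.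
Qed.

End Refl.

Definition dn2 q (f : nat -> nat) := nsub q (f 0 * f 3)%N (f 1 * f 2)%N.
Definition dn3 q (f : nat -> nat) :=
  nsub q (f 0 * f 4 * f 8 + f 1 * f 5 * f 6 + f 2 * f 3 * f 7)%N
         (f 0 * f 5 * f 7 + f 1 * f 3 * f 8 + f 2 * f 4 * f 6)%N.

Lemma det22 (R : comNzRingType) (A : 'M[R]_2) :
  \det A = A 0 0 * A 1 1 - A 0 1 * A 1 0.
Proof.
rewrite (expand_det_row _ 0) !big_ord_recl big_ord0 /cofactor !det_mx11 !mxE /=.
rewrite addr0 expr0 expr1 !mul1r mulN1r mulrN.
congr (_ * _ - _ * _); congr (A _ _); exact: val_inj.
Qed.

Lemma det33 (R : comNzRingType) (A : 'M[R]_3) :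
  \det A = A 0 0 * (A 1 1 * A 2 2 - A 1 2 * A 2 1)
         - A 0 1 * (A 1 0 * A 2 2 - A 1 2 * A 2 0)
         + A 0 2 * (A 1 0 * A 2 1 - A 1 1 * A 2 0).
Proof.
pose a (m n : nat) := A (inord m) (inord n).
have e : forall i j : 'I_3, A i j = a (val i) (val j) by move=> i j; rewrite /a !inord_val.
rewrite (expand_det_row _ 0) !big_ord_recl big_ord0 /cofactor.
rewrite !(expand_det_row _ 0) !big_ord_recl !big_ord0 /cofactor !det_mx11 !mxE !e /=.
ring.
Qed.

Lemma det_mxn2 (F : fieldType) q : (0 < q)%N -> q%:R = 0 :> F ->
  forall f, \det (mxn F 2 f) = (dn2 q f)%:R.
Proof.
move=> Hq Hq0 f; rewrite det22 !mxE /dn2 nsubE // !natrM /=.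
by [].
Qed.

Lemma det_mxn3 (F : fieldType) q : (0 < q)%N -> q%:R = 0 :> F ->
  forall f, \det (mxn F 3 f) = (dn3 q f)%:R.
Proof.
move=> Hq Hq0 f; rewrite det33 !mxE /dn3 nsubE // !natrD !natrM /=.
ring.
Qed.

Lemma check2 : check 3 2 (dn2 3).
Proof. by vm_compute. Qed.

Lemma check3 : check 2 3 (dn3 2).
Proof. by vm_compute. Qed.

Lemma finF_p (F : finFieldType) p : prime p -> #|F| = p ->
  [/\ p%:R = 0 :> F, forall k, (0 < k < p)%N -> k%:R != 0 :> F
    & forall x : F, has (fun k => k%:R == x) (iota 0 p)].
Proof.
move=> pp cF.
have pch : p \in [pchar F] by apply: (@card_finPcharP _ p 1); rewrite ?expn1.
have Hnz : forall k, (0 < k < p)%N -> k%:R != 0 :> F.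
  by move=> k /andP [k0 kp]; rewrite -(dvdn_pcharf pch) gtnNdvd.
split => //; first exact: pcharf0.
move=> x.
pose f (k : 'I_p) : F := (val k)%:R.
have finj : injective f.
  have aux : forall i j : 'I_p, (i <= j)%N -> f i = f j -> i = j.
    move=> i j ij /esym/eqP; rewrite /f -subr_eq0 -natrB // => /eqP h.
    apply: val_inj; apply/eqP; rewrite eqn_leq ij /= -subn_eq0.
    apply/negP => /negP; rewrite -lt0n => h0.
    have : (0 < j - i < p)%N by rewrite h0 /= (leq_ltn_trans (leq_subr _ _)).
    by move/Hnz; rewrite h eqxx.
  move=> i j h; case: (leqP i j) => ij; first exact: aux.
  by apply/esym/aux => //; apply: ltnW.
have : x \in codom f by apply: inj_card_onto => //; rewrite card_ord cF.
case/codomP => k ->; apply/hasP; exists (val k); rewrite ?mem_iota ?ltn_ord //.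
Qed.

Section Main.
Variable F : finFieldType.

Lemma good_all2 (c2 : #|F| = 2) n (A : 'M[F]_n.+3) : good A.
Proof.
have [H0 Hnz Hs] := @finF_p F 2 isT c2.
elim: n A => [|n IH] A.
  exact: (refl_good (q:=2) _ H0 Hnz Hs (det_mxn3 _ H0) check3).
change 'M[F]_(1 + n.+3) in A.
by apply: (good2_step c2).
Qed.

Lemma good_all3 (c3 : #|F| = 3) n (A : 'M[F]_n.+2) : good A.
Proof.
have [H0 Hnz Hs] := @finF_p F 3 isT c3.
elim: n A => [|n IH] A.
  exact: (refl_good (q:=3) _ H0 Hnz Hs (det_mxn2 _ H0) check2).
change 'M[F]_(1 + n.+2) in A.
apply: good_step3; first by rewrite c3.
exact: IH.
Qed.

End Main.

Unset Implicit Arguments.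

Theorem proposition3p2 (F : finFieldType) (d : nat) :
  (0 < d)%N ->
  ~ ((d, #|F|) \in [:: (1, 2); (1, 3); (2, 2)])%N ->
  forall A : 'M[F]_d, A \in unitmx ->
  exists B C : 'M[F]_d,
    [/\ B \in unitmx, C \in unitmx,
        fixed_point_free B, fixed_point_free C & A = B *m C].
Proof.
move=> d0 hd A uA; apply: good_fpf => //.
have c1 : (1 < #|F|)%N := @finNzRing_gt1 F.
case: (ltngtP #|F| 3) => c.
- have c2 : #|F| = 2 by apply/eqP; rewrite eqn_leq -ltnS c c1.
  rewrite c2 in hd.
  case: d d0 hd A uA => [|[|[|d]]] // _ hd A _; try by exfalso; apply: hd; rewrite !inE.
  exact: good_all2.
- exact: good_big.
- rewrite c in hd.
  case: d d0 hd A uA => [|[|d]] // _ hd A _; try by exfalso; apply: hd; rewrite !inE.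
  exact: good_all3.
Qed.
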